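(* Let $B$ be a Lie algebra over a field $k$ satisfying $\Phi1$: $\forall x_1,\dots,x_4\ (x_1x_2)(x_3x_4)=0$, $\Phi2$: $\forall x,y\ (xyx=0\wedge xyy=0\to xy=0)$ and $\Phi3$: $\forall x,y,z\ (x\ne0\wedge xy=0\wedge xz=0\to yz=0)$. Let $a\in B\setminus\mathrm{Fit}(B)$. Then $ab\ne0$ for every nonzero $b\in\mathrm{Fit}(B)$.
   Context: Products are left-normed: $xyx=(xy)x$. $\mathrm{Fit}(B)$ is the sum of all nilpotent ideals of $B$. *)

(* Defs.v *)
From HB Require Import structures.
From mathcomp Require Import all_boot all_order all_algebra.
Set Implicit Arguments. Unset Strict Implicit. Unset Printing Implicit Defensive.
Import GRing.Theory.
Local Open Scope ring_scope.

Definition is_lie_algebra (k : fieldType) (V : lmodType k) (br : V -> V -> V) : Prop :=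
  [/\ (forall (a : k) (x y z : V), br (a *: x + y) z = a *: br x z + br y z),
      (forall (a : k) (x y z : V), br x (a *: y + z) = a *: br x y + br x z),
      (forall x : V, br x x = 0) &
      (forall x y z : V, br x (br y z) + br y (br z x) + br z (br x y) = 0)].

Definition lnprod (V : Type) (br : V -> V -> V) (x : V) (s : seq V) : V :=
  foldl br x s.

Definition lie_ideal (k : fieldType) (V : lmodType k) (br : V -> V -> V)
    (I : V -> Prop) : Prop :=
  [/\ I 0,
      (forall x y, I x -> I y -> I (x + y)),
      (forall (a : k) x, I x -> I (a *: x)),
      (forall x y, I y -> I (br x y)) &
      (forall x y, I x -> I (br x y))].

(* Nilpotent (as a Lie algebra): for some n, all left-normed products of
   n+1 elements of I vanish (i.e. I^{n+1} = 0 for the lower central series). *)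
Definition lie_nilpotent (V : zmodType) (br : V -> V -> V) (I : V -> Prop) : Prop :=
  exists n : nat, forall (x : V) (s : seq V),
    size s = n -> I x -> (forall y, y \in s -> I y) -> lnprod br x s = 0.

(* Fit(B): the sum of all nilpotent ideals, i.e. the set of finite sums of
   elements each lying in some nilpotent ideal. *)
Definition Fit (k : fieldType) (V : lmodType k) (br : V -> V -> V) (x : V) : Prop :=
  exists s : seq V,
    (forall y, y \in s -> exists I : V -> Prop,
        [/\ lie_ideal br I, lie_nilpotent br I & I y]) /\
    x = \sum_(y <- s) y.

(* Main.v *)
Require Import Defs.
From mathcomp Require Import all_boot all_order all_algebra.
Import GRing.Theory.
Local Open Scope ring_scope.

Section Aux.
Variables (k : fieldType) (V : lmodType k) (br : V -> V -> V).
Hypothesis HLie : is_lie_algebra br.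

Lemma brDl x y z : br (x + y) z = br x z + br y z.
Proof. by case: (HLie : [/\ _, _, _ & _]) => H1 _ _ _; rewrite -[x]scale1r H1 !scale1r. Qed.
Lemma brDr x y z : br z (x + y) = br z x + br z y.
Proof. by case: (HLie : [/\ _, _, _ & _]) => _ H1 _ _; rewrite -[x]scale1r H1 !scale1r. Qed.
Lemma br0l z : br 0 z = 0.
Proof.
have e := brDl 0 0 z; rewrite addr0 in e.
by move/(congr1 (fun t => t - br 0 z)): e; rewrite subrr addrK.
Qed.
Lemma br0r z : br z 0 = 0.
Proof.
have e := brDr 0 0 z; rewrite addr0 in e.
by move/(congr1 (fun t => t - br z 0)): e; rewrite subrr addrK.
Qed.
Lemma brZl c x z : br (c *: x) z = c *: br x z.
Proof. by case: (HLie : [/\ _, _, _ & _]) => H1 _ _ _; rewrite -[c *: x]addr0 H1 br0l addr0. Qed.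
Lemma brZr c x z : br z (c *: x) = c *: br z x.
Proof. by case: (HLie : [/\ _, _, _ & _]) => _ H1 _ _; rewrite -[c *: x]addr0 H1 br0r addr0. Qed.
Lemma anti x y : br x y = - br y x.
Proof.
case: (HLie : [/\ _, _, _ & _]) => _ _ H3 _.
have := H3 (x + y); rewrite brDl !brDr !H3 add0r addr0.
by move/eqP; rewrite addr_eq0 => /eqP.
Qed.

Lemma foldlS y j x : foldl br x (nseq j.+1 y) = br (foldl br x (nseq j y)) y.
Proof. by elim: j x => [|j IH] x //=; rewrite -IH. Qed.

End Aux.

Theorem lemma3p2 (k : fieldType) (V : lmodType k) (br : V -> V -> V)
  (HLie : is_lie_algebra br)
  (Phi1 : forall x1 x2 x3 x4 : V, br (br x1 x2) (br x3 x4) = 0)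
  (Phi2 : forall x y : V, br (br x y) x = 0 -> br (br x y) y = 0 -> br x y = 0)
  (Phi3 : forall x y z : V, x != 0 -> br x y = 0 -> br x z = 0 -> br y z = 0)
  (a : V) (Ha : ~ Fit br a) :
  forall b : V, Fit br b -> b != 0 -> br a b != 0.
Proof.
pose I := fun x : V => forall u v, br x (br u v) = 0.
have Hyy : forall (J : V -> Prop) y, lie_ideal br J -> lie_nilpotent br J -> J y ->
    forall x, br (br x y) y = 0.
  move=> J y [_ _ _ J4 _] [n Hn] Jy.
  pose P j := forall x, foldl br x (nseq j y) = 0.
  have Pn : P n.+1.
    move=> x /=; apply: Hn; first by rewrite size_nseq.
      by apply: J4.
    by move=> z /nseqP [-> _].
  have PS : forall j, P j -> P j.+1 by move=> j Pj x /=; apply: Pj.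
  have Pdown : forall d, P (d + 2)%N -> P 2.
    elim=> [//|d IH] Pd; apply: IH => x.
    set p := foldl br x (nseq d y).
    have := Pd x; rewrite addSn addn2 !foldlS -/p => e.
    apply: Phi2; [exact: Phi1 | exact: e].
  have := Pdown n; rewrite addn2 => /(_ (PS _ Pn)) P2 x.
  by have := P2 x; rewrite !foldlS.
have HI : forall (J : V -> Prop) y, lie_ideal br J -> lie_nilpotent br J -> J y -> I y.
  move=> J y Jid Jn Jy u v.
  have [//|ne] := eqVneq (br y (br u v)) 0.
  set c := br y (br u v) in ne.
  apply: (Phi3 c) => //.
    by rewrite /c (@anti _ _ br HLie y (br u v)) -scaleN1r (@brZl _ _ br HLie) (Hyy J) // scaler0.
  by rewrite /c Phi1.
have Isum : forall s : seq V, (forall y, y \in s -> I y) -> I (\sum_(y <- s) y).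
  elim=> [|z s IH] Hs u v; first by rewrite big_nil (@br0l _ _ br HLie).
  rewrite big_cons (@brDl _ _ br HLie) (Hs z (mem_head _ _)) add0r; apply: IH => y ys.
  by apply: Hs; rewrite inE ys orbT.
move=> b [s [Hs ->]] bn0; apply/negP => /eqP hab.
apply: Ha; exists [:: a]; split; last by rewrite big_seq1.
move=> z; rewrite inE => /eqP ->.
have Ib : I (\sum_(y <- s) y).
  apply: Isum => y /Hs [J [J1 J2 J3]]; exact: (HI J y J1 J2 J3).
have Ia : I a.
  move=> u v; apply: (Phi3 _ _ _ bn0); last exact: Ib.
  by rewrite (@anti _ _ br HLie) hab oppr0.
exists I; split => //.
- split.
  + by move=> u v; rewrite (@br0l _ _ br HLie).
  + by move=> x y Ix Iy u v; rewrite (@brDl _ _ br HLie) Ix Iy addr0.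
  + by move=> c x Ix u v; rewrite (@brZl _ _ br HLie) Ix scaler0.
  + by move=> x y _ u v; rewrite Phi1.
  + by move=> x y _ u v; rewrite Phi1.
- exists 2%N => x [|x1 [|x2 [|? ?]]] // _ _ Hin; rewrite /lnprod /=.
  rewrite (@anti _ _ br HLie); apply/eqP; rewrite oppr_eq0; apply/eqP.
  by apply: Hin; rewrite !inE eqxx orbT.
Qed.
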